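(* Let $X$ be a complex Banach space, $\mathcal{F}$ an algebra with unit, and $\Phi_1,\Phi_2:\mathcal{F}\to\mathcal{C}(X)$ calculi. Suppose there is a subset $\mathcal{E}\subseteq\mathcal{F}$ such that (1) $\Phi_1(e)=\Phi_2(e)\in\mathcal{L}(X)$ for all $e\in\mathcal{E}$, and (2) $\mathcal{F}$ is anchored in $\mathcal{E}$ (with respect to $\Phi_1$, equivalently $\Phi_2$). Then $\Phi_1=\Phi_2$.
   Context: $\mathcal{F}$ need not be commutative. $\mathcal{L}(X)$, $\mathcal{C}(X)$: bounded, resp. closed linear operators on $X$; operator inclusions are graph inclusions, sums/products have natural domains, ''$Tx=y$'' means $x\in\mathrm{dom}(T)$, $Tx=y$. A proto-calculus is a map $\Phi:\mathcal{F}\to\mathcal{C}(X)$ with (FC1) $\Phi(\mathbf{1})=I$; (FC2) $\lambda\Phi(f)\subseteq\Phi(\lambda f)$, $\Phi(f)+\Phi(g)\subseteq\Phi(f+g)$; (FC3) $\Phi(f)\Phi(g)\subseteq\Phi(fg)$ with $\mathrm{dom}(\Phi(f)\Phi(g))=\mathrm{dom}(\Phi(g))\cap\mathrm{dom}(\Phi(fg))$. $\mathrm{bdd}(\mathcal{F},\Phi)=\{f:\Phi(f)\in\mathcal{L}(X)\}$, $\mathrm{reg}(f,\Phi)=\{e: e,ef\in\mathrm{bdd}(\mathcal{F},\Phi)\}$. A calculus is a proto-calculus such that for every $f\in\mathcal{F}$ and $x,y\in X$: $\Phi(f)x=y\iff\Phi(ef)x=\Phi(e)y$ for all $e\in\mathrm{reg}(f,\Phi)$.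 For $\mathcal{E}\subseteq\mathcal{F}$ and $f\in\mathcal{F}$ let $[f]_{\mathcal{E}}=\{e\in\mathcal{E}:ef\in\mathcal{E}\}$; $f$ is anchored in $\mathcal{E}$ (w.r.t. $\Phi$) if $[f]_{\mathcal{E}}$ is nonempty, consists of $\Phi$-bounded elements, and $\bigcap_{e\in[f]_{\mathcal{E}}}\ker\Phi(e)=\{0\}$; $\mathcal{F}$ is anchored in $\mathcal{E}$ if every $f\in\mathcal{F}$ is. *)

(* Defs.v *)
From mathcomp Require Import all_boot all_algebra.
From mathcomp Require Import complex.
From mathcomp Require Import all_classical all_reals all_analysis.
Set Implicit Arguments. Unset Strict Implicit. Unset Printing Implicit Defensive.
Import GRing.Theory Num.Theory.
Local Open Scope ring_scope.
Local Open Scope classical_set_scope.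

(* Scalars: the complex numbers R[i] for R : realType.
   X : completeNormedModType R[i] is a complex Banach space.
   A (possibly unbounded) operator on X is represented by its graph. *)
Section Ops.
Variables (R : realType) (X : completeNormedModType R[i]).

Definition op := X -> X -> Prop.

Definition op_dom (T : op) (x : X) : Prop := exists y, T x y.

(* linear operator: the graph is a linear subspace of X x X which is single-valued *)
Definition is_linop (T : op) : Prop :=
  [/\ T 0 0,
      (forall x1 y1 x2 y2, T x1 y1 -> T x2 y2 -> T (x1 + x2) (y1 + y2)),
      (forall (a : R[i]) x y, T x y -> T (a *: x) (a *: y)) &
      (forall y, T 0 y -> y = 0)].

Definition closed_op (T : op) : Prop :=
  is_linop T /\ closed [set p : X * X | T p.1 p.2].

Definition bounded_op (T : op) : Prop :=
  [/\ is_linop T, (forall x, op_dom T x) &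
      exists M : R[i], forall x y, T x y -> `|y| <= M * `|x|].

Definition op_incl (T S : op) : Prop := forall x y, T x y -> S x y.

Definition op_add (T S : op) : op :=
  fun x z => exists y1 y2, [/\ T x y1, S x y2 & z = y1 + y2].
Definition op_scale (a : R[i]) (T : op) : op :=
  fun x z => exists y, T x y /\ z = a *: y.
(* op_comp T S = T S  (first apply S, then T) *)
Definition op_comp (T S : op) : op :=
  fun x z => exists y, S x y /\ T y z.
Definition op_id : op := fun x y => y = x.

End Ops.

Section Calculus.
Variables (R : realType) (X : completeNormedModType R[i]) (F : algType R[i]).

Definition proto_calculus (Phi : F -> op X) : Prop :=
  [/\ (forall f, closed_op (Phi f)),
      Phi 1 = @op_id R X,
      (forall (l : R[i]) f, op_incl (op_scale l (Phi f)) (Phi (l *: f))) /\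
      (forall f g, op_incl (op_add (Phi f) (Phi g)) (Phi (f + g)))
    & forall f g, op_incl (op_comp (Phi f) (Phi g)) (Phi (f * g)) /\
        (forall x, op_dom (op_comp (Phi f) (Phi g)) x <->
                   op_dom (Phi g) x /\ op_dom (Phi (f * g)) x)] .

Definition Phi_bdd (Phi : F -> op X) (f : F) : Prop := bounded_op (Phi f).

Definition Phi_reg (Phi : F -> op X) (f e : F) : Prop :=
  Phi_bdd Phi e /\ Phi_bdd Phi (e * f).

Definition calculus (Phi : F -> op X) : Prop :=
  proto_calculus Phi /\
  forall f x y, Phi f x y <->
    (forall e, Phi_reg Phi f e -> exists z, Phi e y z /\ Phi (e * f) x z).

Definition anchor_set (E : set F) (f : F) : set F :=
  [set e | E e /\ E (e * f)].

Definition anchored_in (Phi : F -> op X) (E : set F) (f : F) : Prop :=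
  [/\ exists e, anchor_set E f e,
      (forall e, anchor_set E f e -> Phi_bdd Phi e) &
      (forall x, (forall e, anchor_set E f e -> Phi e x 0) -> x = 0)].

Definition all_anchored_in (Phi : F -> op X) (E : set F) : Prop :=
  forall f, anchored_in Phi E f.

End Calculus.

(* Main.v *)
Require Import Defs.
From mathcomp Require Import all_boot all_algebra.
From mathcomp Require Import complex.
From mathcomp Require Import all_classical all_reals all_analysis.
Import GRing.Theory Num.Theory.
Local Open Scope ring_scope.
Local Open Scope classical_set_scope.

Section Aux.
Variables (R : realType) (X : completeNormedModType R[i]) (F : algType R[i]).

Lemma lin_sub {T : op X} {x1 y1 x2 y2} : is_linop T -> T x1 y1 -> T x2 y2 ->
  T (x1 - x2) (y1 - y2).
Proof.
case=> _ Hadd Hsc _ h1 h2. have := Hsc (-1) _ _ h2. rewrite !scaleN1r => h.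
exact: Hadd h1 h.
Qed.

Lemma lin_fun {T : op X} {x y1 y2} : is_linop T -> T x y1 -> T x y2 -> y1 = y2.
Proof.
move=> hT h1 h2. have := lin_sub hT h1 h2. rewrite subrr => h.
case: hT => _ _ _ H0. apply: subr0_eq. exact: H0.
Qed.

Lemma one_dir (Pa Pb : F -> op X) (E : set F) :
  calculus Pa -> calculus Pb ->
  (forall e, E e -> Pa e = Pb e /\ bounded_op (Pa e)) ->
  (forall f x, (forall e, anchor_set E f e -> Pa e x 0) -> x = 0) ->
  forall f x y, Pa f x y -> Pb f x y.
Proof.
move=> [[Cla _ _ FC3a] _] [[Clb _ _ FC3b] C2] HE HA.
have G : forall g x z z', Pa g x z -> Pb g x z' -> z = z'.
  move=> g x z z' hz hz'. apply: subr0_eq. apply: (HA g) => d [Ed Edg].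
  have [eqd [lind domd _]] := HE d Ed.
  have [eqdg _] := HE _ Edg.
  have [u hu] := domd z. have [u' hu'] := domd z'.
  have h1 : Pa (d * g) x u by apply: (FC3a d g).1; exists z.
  have h2 : Pb (d * g) x u' by apply: (FC3b d g).1; exists z'; rewrite -eqd.
  rewrite -eqdg in h2.
  have := lin_fun (Cla _).1 h1 h2 => equ. subst u'.
  have := lin_sub lind hu hu'. by rewrite subrr.
move=> f x y hf.
apply/(C2 f x y).2 => e' [[line' dome' _] [linef dome'f _]].
have [z hz] := dome' y. have [w hw] := dome'f x.
exists z; split => //.
suff <- : w = z by [].
apply: subr0_eq. apply: (HA e') => d [Ed Ede'].
have [eqd [lind domd _]] := HE d Ed.
have [eqde _] := HE _ Ede'.
have [u hu] := domd w. have [v hv] := domd z.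
rewrite eqd in hu hv.
have h1 : Pb (d * (e' * f)) x u by apply: (FC3b d (e' * f)).1; exists w.
have h2 : Pb (d * e') y v by apply: (FC3b d e').1; exists z.
rewrite -eqde in h2.
have h3 : Pa (d * e' * f) x v by apply: (FC3a (d * e') f).1; exists y.
rewrite mulrA in h1.
have := G _ _ _ _ h3 h1 => evu. subst v.
rewrite eqd. have := lin_sub (Clb d).1 hu hv. by rewrite subrr.
Qed.

End Aux.

Theorem theorem5p2 (R : realType) (X : completeNormedModType R[i]) (F : algType R[i])
    (Phi1 Phi2 : F -> op X) (E : set F) :
  calculus Phi1 -> calculus Phi2 ->
  (forall e, E e -> Phi1 e = Phi2 e /\ bounded_op (Phi1 e)) ->
  all_anchored_in Phi1 E ->
  Phi1 = Phi2.
Proof.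
move=> C1 C2 HE HA.
have HA1 : forall f x, (forall e, anchor_set E f e -> Phi1 e x 0) -> x = 0.
  by move=> f x; case: (HA f) => _ _; apply.
have HE2 : forall e, E e -> Phi2 e = Phi1 e /\ bounded_op (Phi2 e).
  by move=> e Ee; have [-> ?] := HE e Ee.
have HA2 : forall f x, (forall e, anchor_set E f e -> Phi2 e x 0) -> x = 0.
  move=> f x H; apply: (HA1 f) => e [Ee Eef].
  have [-> _] := HE e Ee. exact: H.
apply/funext => f; apply/funext => x; apply/funext => y.
apply/propext; split.
- exact: one_dir C1 C2 HE HA1 f x y.
- exact: one_dir C2 C1 HE2 HA2 f x y.
Qed.
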